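(* For every graph $G$ with $\mu$ maximal cliques, $b_H(G)\le \mu-1$.
   Context: A grid is the set of integer points of the plane; a grid edge joins two grid points at distance $1$. A path in the grid is a sequence of distinct grid edges in which consecutive edges share exactly one grid point and non-consecutive edges share none; a bend is a pair of consecutive edges with different directions (horizontal/vertical). An EPG representation of a graph $G$ is a family $(P_v)_{v\in V(G)}$ of grid paths such that distinct $u,v$ are adjacent iff $P_u,P_v$ share a grid edge; it is $B_k$-EPG if every path has at most $k$ bends, and Helly if every subfamily of pairwise edge-intersecting paths has a grid edge common to all its members. The Helly-bend number $b_H(G)$ is the smallest $k$ such that $G$ admits a Helly $B_k$-EPG representation. *)

(* Defs.v *)
From mathcomp Require Import all_boot all_order all_algebra.
Set Implicit Arguments. Unset Strict Implicit. Unset Printing Implicit Defensive.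
Import GRing.Theory Num.Theory.
Local Open Scope ring_scope.

Definition gpoint := (int * int)%type.

(** A grid edge joins two grid points at distance 1.  We represent it
    canonically by its lower/left endpoint [p] and a direction flag:
    [(p, true)] is the horizontal edge from p to p + (1,0),
    [(p, false)] is the vertical edge from p to p + (0,1).
    This is a bijection with the set of grid edges. *)
Definition gedge := (gpoint * bool)%type.

Definition is_horizontal (e : gedge) : bool := e.2.

Definition endpoints (e : gedge) : seq gpoint :=
  let p := e.1 in
  if e.2 then [:: p; (p.1 + 1, p.2)] else [:: p; (p.1, p.2 + 1)].

Definition nshared (e f : gedge) : nat :=
  count (fun q => q \in endpoints f) (endpoints e).

Definition grid_path (s : seq gedge) : Prop :=
  [/\ s != [::], uniq s &
   forall i j : nat, (i < j < size s)%N ->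
     nshared (nth (0, 0, true) s i) (nth (0, 0, true) s j)
       = (if j == i.+1 then 1%N else 0%N)].

Definition bends (s : seq gedge) : nat :=
  count (fun i => is_horizontal (nth (0, 0, true) s i)
                  != is_horizontal (nth (0, 0, true) s i.+1))
        (iota 0 (size s).-1).

(** A finite simple graph is given by a symmetric irreflexive relation
    [adj] on a finite type [V]. *)

Definition EPG_rep (V : finType) (adj : rel V) (P : V -> seq gedge) : Prop :=
  (forall v, grid_path (P v)) /\
  (forall u v, u != v -> (adj u v <-> exists e, e \in P u /\ e \in P v)).

Definition Bk_EPG (V : finType) (adj : rel V) (k : nat) (P : V -> seq gedge)
  : Prop := EPG_rep adj P /\ (forall v, (bends (P v) <= k)%N).

Definition helly_rep (V : finType) (P : V -> seq gedge) : Prop :=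
  forall S : {set V},
    (forall u v, u \in S -> v \in S -> exists e, e \in P u /\ e \in P v) ->
    exists e, forall v, v \in S -> e \in P v.

Definition has_helly_Bk_EPG (V : finType) (adj : rel V) (k : nat) : Prop :=
  exists P : V -> seq gedge, Bk_EPG adj k P /\ helly_rep P.

Definition is_clique (V : finType) (adj : rel V) (A : {set V}) : bool :=
  [forall x in A, forall y in A, (x != y) ==> adj x y].

Definition is_max_clique (V : finType) (adj : rel V) (A : {set V}) : bool :=
  is_clique adj A &&
  [forall B : {set V}, (is_clique adj B && (A \subset B)) ==> (B == A)].

Definition num_max_cliques (V : finType) (adj : rel V) : nat :=
  #|[set A : {set V} | is_max_clique adj A]|.

(* Main.v *)
Require Import Defs.
From mathcomp Require Import all_boot all_order all_algebra.
From mathcomp Require Import zify.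
Set Implicit Arguments. Unset Strict Implicit. Unset Printing Implicit Defensive.

Import GRing.Theory Num.Theory.
Local Open Scope ring_scope.

Definition sumc (p : gpoint) : int := p.1 + p.2.
Definition tip (e : gedge) : gpoint :=
  if e.2 then (e.1.1 + 1, e.1.2) else (e.1.1, e.1.2 + 1).
Definition Rnext (e f : gedge) : bool := f.1 == tip e.

Lemma endpointsE e : endpoints e = [:: e.1; tip e].
Proof. by case: e => [p []]. Qed.

Lemma sumc_tip e : sumc (tip e) = sumc e.1 + 1.
Proof. case: e => [[x y] []]; rewrite /sumc /tip /=; lia. Qed.

Lemma neq_sumc p q : sumc p != sumc q -> (p == q) = false.
Proof. by apply: contraNF => /eqP ->. Qed.

Lemma nshared0 e f : sumc e.1 + 2 <= sumc f.1 -> nshared e f = 0%N.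
Proof.
move=> H; rewrite /nshared !endpointsE /= !inE.
rewrite !neq_sumc //; rewrite ?sumc_tip; apply/eqP; lia.
Qed.

Lemma nshared1 e f : f.1 = tip e -> nshared e f = 1%N.
Proof.
move=> H; have Hf : sumc f.1 = sumc e.1 + 1 by rewrite H sumc_tip.
rewrite /nshared !endpointsE /= !inE -H eqxx.
rewrite !neq_sumc //; rewrite ?sumc_tip ?Hf; apply/eqP; lia.
Qed.

Lemma grid_path_chain s : s != [::] -> sorted Rnext s -> grid_path s.
Proof.
set x0 := (0, 0, true) : gedge.
move=> Hne Hs.
have Hn : forall i, (i < size s)%N ->
    sumc (nth x0 s i).1 = sumc (nth x0 s 0).1 + i%:Z.
  case: s Hne Hs => // x s' _ /= /(pathP x0) Hp.
  elim=> [|i IH] Hi; first by rewrite addr0.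
  have := Hp i Hi; rewrite /Rnext => /eqP ->.
  rewrite sumc_tip IH /=; last by apply: ltnW.
  lia.
have Hr : forall i, (i.+1 < size s)%N -> Rnext (nth x0 s i) (nth x0 s i.+1).
  case: s Hne Hs {Hn} => // x s' _ /= /(pathP x0) Hp i Hi.
  exact: Hp.
rewrite /grid_path -/x0; split => //.
  apply/(uniqP x0) => i j Hi Hj Heq.
  have := congr1 (fun e : gedge => sumc e.1) Heq.
  move: Hi Hj; rewrite !inE => Hi Hj.
  rewrite /= (Hn i) // (Hn j) //; lia.
move=> i j /andP [Hij Hj].
case: eqP => [Ej|Hne2].
  subst j; apply: nshared1; apply/eqP; exact: Hr.
apply: nshared0.
rewrite (Hn i); last exact: ltn_trans Hij Hj.
rewrite (Hn j) //. lia.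
Qed.

Fixpoint changes (s : seq bool) : nat :=
  if s is a :: t then
    (if t is b :: _ then ((a != b) + changes t)%N else 0%N)
  else 0%N.

Lemma bendsE s : bends s = changes (map snd s).
Proof.
elim: s => [|e s IH] //.
case: s IH => [|f s] IH //.
rewrite /bends /= in IH *.
rewrite -add1n iotaDl count_map -IH /=.
congr (_ + _)%N.
Qed.

Lemma changes_nseq l b t : changes (nseq l.+1 b ++ t) = changes (b :: t).
Proof. by elim: l => //= l ->; rewrite eqxx. Qed.

Lemma changes_cons b t : (changes (b :: t) <= 1 + changes t)%N.
Proof. by case: t => //= c t; case: (b != c). Qed.

Lemma changes_flatten (L : seq (nat * bool)) :
  all (fun p => 0 < p.1)%N L ->
  (changes (flatten [seq nseq p.1 p.2 | p <- L]) <= (size L).-1)%N.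
Proof.
elim: L => [|[l b] L IH] //= /andP [Hl HL].
case: l Hl => // l _.
rewrite changes_nseq.
case: L IH HL => [|p L] IH HL //=.
apply: leq_trans (changes_cons _ _) _.
by rewrite add1n ltnS IH.
Qed.


Definition cl (V : finType) (adj : rel V) : seq {set V} :=
  enum [set A : {set V} | is_max_clique adj A].

Definition inC (V : finType) (adj : rel V) (v : V) (k : nat) : bool :=
  (0 < k <= size (cl adj))%N && (v \in nth set0 (cl adj) k.-1).

Definition BB (V : finType) : nat := #|V|.+2.

Definition cc (V : finType) (adj : rel V) (v : V) (k : nat) : int :=
  (k * BB V)%N%:Z + (if inC adj v k then 0%N else (enum_rank v).+1)%:Z.

Definition segf (V : finType) (adj : rel V) (v : V) (k : nat) (i : nat) : gedge :=
  if odd k then ((cc adj v k.-1 + i%:Z, cc adj v k), true)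
  else ((cc adj v k, cc adj v k.-1 + i%:Z), false).

Definition seg (V : finType) (adj : rel V) (v : V) (k : nat) : seq gedge :=
  map (segf adj v k) (iota 0 `|cc adj v k.+1 - cc adj v k.-1|).

Definition PP (V : finType) (adj : rel V) (v : V) : seq gedge :=
  flatten (map (seg adj v) (iota 1 (size (cl adj)))).

Lemma cc_lo (V : finType) (adj : rel V) v k : ((k * BB V)%N%:Z <= cc adj v k).
Proof. rewrite /cc; case: inC; lia. Qed.

Lemma cc_hi (V : finType) (adj : rel V) v k : (cc adj v k <= (k * BB V + #|V|)%N%:Z).
Proof.
rewrite /cc; have : (enum_rank v < #|V|)%N := ltn_ord (enum_rank v); case: inC; lia.
Qed.

Lemma cc_gap (V : finType) (adj : rel V) v k : (0 < k)%N ->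
  cc adj v k.-1 + 2 <= cc adj v k.+1.
Proof.
case: k => // k _ /=.
have := cc_hi adj v k; have := cc_lo adj v k.+2; rewrite /BB.
have : (k * #|V|.+2 + #|V| + 2 <= k.+2 * #|V|.+2)%N by nia.
lia.
Qed.

Lemma sorted_flatten (T : Type) (R : rel T) (x0 : T) (L : seq (seq T)) :
  all (fun s => ~~ nilp s) L -> all (sorted R) L ->
  (forall i, (i.+1 < size L)%N ->
     R (last x0 (nth [::] L i)) (head x0 (nth [::] L i.+1))) ->
  sorted R (flatten L).
Proof.
elim: L => [|s L IH] //= /andP [Hs HL] /andP [Ss SL] J.
case: s Hs Ss J => // x s _ Ss J.
rewrite /= cat_path; move: Ss; rewrite /= => -> /=.
case: L IH HL SL J => [|t L] IH HL SL J //.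
move: (IH HL SL (fun i Hi => J i.+1 Hi)) => {IH}.
case: t HL SL J => // y t HL SL J /= ->.

by rewrite andbT; have := J 0%N isT.
Qed.

Lemma path_iota_rel (T : Type) (R : rel T) (f : nat -> T) :
  (forall i, R (f i) (f i.+1)) ->
  forall L a, path (relpre f R) a (iota a.+1 L).
Proof. move=> Hf; elim=> [|L IH] a //=; by rewrite Hf IH. Qed.

Lemma last_iota a L : last a (iota a.+1 L) = (a + L)%N.
Proof. by elim: L a => [|L IH] a /=; [rewrite addn0 | rewrite IH addSnnS]. Qed.

Lemma seg_size (V : finType) (adj : rel V) v k : (0 < k)%N ->
  exists L, size (seg adj v k) = L.+1 /\
     (L.+1)%:Z = cc adj v k.+1 - cc adj v k.-1.
Proof.
move=> Hk; have := cc_gap adj v Hk; rewrite /seg size_map size_iota.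
case E : `|cc adj v k.+1 - cc adj v k.-1|%N => [|L] H; first lia.
exists L; split => //; lia.
Qed.

Lemma segf_next (V : finType) (adj : rel V) v k i :
  Rnext (segf adj v k i) (segf adj v k i.+1).
Proof.
rewrite /Rnext /segf /tip; case: (odd k) => /=; apply/eqP; congr (_, _); lia.
Qed.

Lemma seg_sorted (V : finType) (adj : rel V) v k : sorted Rnext (seg adj v k).
Proof.
rewrite /seg; case: `|_|%N => [|L] //=.
rewrite path_map.
exact: (path_iota_rel (segf_next adj v k) L 0%N).
Qed.

Lemma seg_junction (V : finType) (adj : rel V) v k x0 : (0 < k)%N ->
  Rnext (last x0 (seg adj v k)) (head x0 (seg adj v k.+1)).
Proof.
move=> Hk; have [L [HL HL2]] := seg_size adj v Hk.
have [L' [HL' _]] := seg_size adj v (ltn0Sn k).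
move: HL HL'; rewrite /seg !size_map !size_iota => -> -> /=.
rewrite (last_map (segf adj v k)) last_iota add0n.
rewrite /Rnext /segf /tip /=; case: (odd k) => /=; apply/eqP; congr (_, _); lia.
Qed.

Lemma PP_sorted (V : finType) (adj : rel V) v : sorted Rnext (PP adj v).
Proof.
apply: (sorted_flatten (x0 := (0, 0, true) : gedge)).
- apply/allP => s /mapP [k]; rewrite mem_iota => /andP [Hk _] ->.
  have [L [HL _]] := seg_size adj v Hk; by rewrite /nilp HL.
- by apply/allP => s /mapP [k _ ->]; apply: seg_sorted.
- move=> i; rewrite size_map size_iota => Hi.
  rewrite (nth_map 0%N); last by rewrite size_iota; apply: ltnW.
  rewrite (nth_map 0%N); last by rewrite size_iota.
  rewrite !nth_iota //; last by apply: ltnW.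
  rewrite addnS; exact: seg_junction.
Qed.

Lemma mem_PP (V : finType) (adj : rel V) v e : e \in PP adj v ->
  exists k i, [/\ (0 < k)%N, (k <= size (cl adj))%N & e = segf adj v k i].
Proof.
move=> /flatten_mapP [k]; rewrite mem_iota => /andP [Hk1 Hk2] /mapP [i _ ->].
exists k, i; split => //; by rewrite -ltnS -(add1n (size _)).
Qed.

Lemma band_inj (k k' B n : nat) (x : int) : (n < B)%N ->
  (k * B)%N%:Z <= x -> x <= (k * B + n)%N%:Z ->
  (k' * B)%N%:Z <= x -> x <= (k' * B + n)%N%:Z -> k = k'.
Proof.
move=> HnB H1 H2 H3 H4.
case: (ltngtP k k') => // H.
  have := leq_mul H (leqnn B); rewrite mulSn; lia.
have := leq_mul H (leqnn B); rewrite mulSn; lia.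
Qed.

Lemma cl_max (V : finType) (adj : rel V) j : (j < size (cl adj))%N ->
  is_max_clique adj (nth set0 (cl adj) j).
Proof.
move=> Hj; have := mem_nth set0 Hj; rewrite /cl mem_enum inE; by [].
Qed.

Lemma share_adj (V : finType) (adj : rel V) u v e : u != v ->
  e \in PP adj u -> e \in PP adj v -> adj u v.
Proof.
move=> Huv /mem_PP [k [i [Hk1 Hk2 ->]]] /mem_PP [k' [i' [Hk1' Hk2' He]]].
have Hodd : odd k = odd k'.
  by move: He; rewrite /segf; case: (odd k); case: (odd k') => // [[]].
have Hline : cc adj u k = cc adj v k'.
  by move: He; rewrite /segf -Hodd; case: (odd k) => [/(congr1 (fun p : gedge => p.1.2))|/(congr1 (fun p : gedge => p.1.1))].
have Ekk : k = k'.
  apply: (@band_inj k k' (BB V) #|V| (cc adj u k)); first by rewrite /BB.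
  - exact: cc_lo.
  - exact: cc_hi.
  - rewrite Hline; exact: cc_lo.
  - rewrite Hline; exact: cc_hi.
subst k'.
move: Hline; rewrite /cc.
case Hu: (inC adj u k); case Hv: (inC adj v k) => H; try lia.
  move: Hu Hv; rewrite /inC => /andP [_ Hu] /andP [_ Hv].
  have : (k.-1 < size (cl adj))%N by clear -Hk1 Hk2; case: k Hk1 Hk2.
  move=> /cl_max /andP [/forallP Hc _].
  by move: (Hc u); rewrite Hu /= => /forallP /(_ v); rewrite Hv Huv.
have : enum_rank u = enum_rank v by apply: ord_inj; lia.
move=> /enum_rank_inj Euv; by rewrite Euv eqxx in Huv.
Qed.

Lemma clique_edge (V : finType) (adj : rel V) v j :
  (j < size (cl adj))%N -> v \in nth set0 (cl adj) j ->
  ((((j.+1 * BB V)%N%:Z, (j.+1 * BB V)%N%:Z), odd j.+1) : gedge) \in PP adj v.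
Proof.
move=> Hj Hv.
have HinC : inC adj v j.+1 by rewrite /inC /= Hv andbT.
apply/flatten_mapP; exists j.+1; first by rewrite mem_iota; lia.
apply/mapP.
have Hlo := cc_lo adj v j.+2.
have Hhi := cc_hi adj v j.
have E1 : (j.+1 * BB V = j * BB V + BB V)%N by rewrite !mulSn; lia.
have E2 : (j.+2 * BB V = j * BB V + BB V + BB V)%N by rewrite !mulSn; lia.
have HB : (#|V| < BB V)%N by rewrite /BB.
exists `|(j.+1 * BB V)%N%:Z - cc adj v j|%N.
  rewrite mem_iota add0n /=; lia.
rewrite /segf /= /cc HinC /= addr0.
case: (odd j) => /=; congr (_, _, _); rewrite -/(cc adj v j); lia.
Qed.

Lemma max_clique_ext (V : finType) (adj : rel V) (S : {set V}) :
  is_clique adj S -> exists C, is_max_clique adj C && (S \subset C).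
Proof.
move=> HS.
pose P := fun B : {set V} => is_clique adj B && (S \subset B).
have PS : P S by rewrite /P HS subxx.
case: (arg_maxnP (fun B : {set V} => #|B|) PS) => C /andP [HC SC] Cmax.
exists C; rewrite SC andbT /is_max_clique HC /=.
apply/forallP => B; apply/implyP => /andP [HB CB].
rewrite eq_sym eqEcard CB /=.
apply: Cmax; rewrite /P HB /=; exact: subset_trans SC CB.
Qed.

Lemma map_constant (T U : Type) (f : T -> U) (c : U) (s : seq T) :
  (forall x, f x = c) -> map f s = nseq (size s) c.
Proof. by move=> Hf; elim: s => //= x s ->; rewrite Hf. Qed.

Lemma PP_bends (V : finType) (adj : rel V) v :
  (bends (PP adj v) <= (size (cl adj)).-1)%N.
Proof.
rewrite bendsE /PP map_flatten -map_comp.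
have -> : [seq (map snd \o seg adj v) k | k <- iota 1 (size (cl adj))] =
          [seq nseq p.1 p.2 | p <- [seq (size (seg adj v k), odd k) | k <- iota 1 (size (cl adj))]].
  rewrite -map_comp; apply: eq_map => k /=.
  rewrite /seg -map_comp size_map; apply: map_constant => i /=.
  by rewrite /segf; case: (odd k).
have := changes_flatten (L := [seq (size (seg adj v k), odd k) | k <- iota 1 (size (cl adj))]).
rewrite size_map size_iota; apply.
apply/allP => p /mapP [k]; rewrite mem_iota => /andP [Hk _] -> /=.
by have [L [-> _]] := seg_size adj v Hk.
Qed.

Lemma max_clique_index (V : finType) (adj : rel V) (C : {set V}) :
  is_max_clique adj C -> exists2 j, (j < size (cl adj))%N & nth set0 (cl adj) j = C.
Proof.
move=> HC; have HCin : C \in cl adj by rewrite /cl mem_enum inE.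
exists (index C (cl adj)); [by rewrite index_mem | exact: nth_index].
Qed.

Lemma pair_clique (V : finType) (adj : rel V) (adj_sym : symmetric adj) u v :
  adj u v -> is_clique adj [set u; v].
Proof.
move=> Huv; apply/forallP => x; apply/implyP; rewrite !inE => Hx.
apply/forallP => y; apply/implyP; rewrite !inE => Hy; apply/implyP => Hxy.
case/orP: Hx => /eqP Ex; case/orP: Hy => /eqP Ey; subst x y; rewrite ?eqxx // in Hxy; by rewrite adj_sym.
Qed.

Theorem corollary2p1 (V : finType) (adj : rel V)
  (adj_sym : symmetric adj) (adj_irr : irreflexive adj) :
  exists k : nat, (k <= num_max_cliques adj - 1)%N /\ has_helly_Bk_EPG adj k.
Proof.
have Hm : num_max_cliques adj = size (cl adj) by rewrite /num_max_cliques cardE.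
exists (size (cl adj)).-1; split; first by rewrite Hm subn1.
exists (PP adj); split; first split; first split.
- move=> v; apply: grid_path_chain; last exact: PP_sorted.
  have [C /andP [HC SC]] : exists C, is_max_clique adj C && ([set v] \subset C).
    apply: max_clique_ext; apply/forallP => x; apply/implyP; rewrite inE => /eqP ->.
    apply/forallP => y; apply/implyP; rewrite inE => /eqP ->; by rewrite eqxx.
  have [j Hj EC] := max_clique_index HC.
  have : (1 <= size (cl adj))%N by apply: leq_ltn_trans Hj.
  rewrite /PP; case: (size (cl adj)) => // m _ /=.
  have [L [HL _]] := seg_size adj v (ltn0Sn 0).
  by case: (seg adj v 1) HL.
- move=> u v Huv; split.
  + move=> Hadj.
    have [C /andP [HC SC]] := max_clique_ext (pair_clique adj_sym Hadj).
    have [j Hj EC] := max_clique_index HC.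
    exists ((((j.+1 * BB V)%N%:Z, (j.+1 * BB V)%N%:Z), odd j.+1) : gedge).
    split; apply: clique_edge => //; rewrite EC; apply: (subsetP SC); by rewrite !inE eqxx ?orbT.
  + by move=> [e [Hu Hv]]; apply: share_adj Hu Hv.
- move=> v; exact: PP_bends.
- move=> S HS.
  have HSc : is_clique adj S.
    apply/forallP => x; apply/implyP => Hx; apply/forallP => y; apply/implyP => Hy.
    apply/implyP => Hxy; have [e [H1 H2]] := HS x y Hx Hy.
    exact: share_adj Hxy H1 H2.
  have [C /andP [HC SC]] := max_clique_ext HSc.
  have [j Hj EC] := max_clique_index HC.
  exists ((((j.+1 * BB V)%N%:Z, (j.+1 * BB V)%N%:Z), odd j.+1) : gedge).
  move=> v Hv; apply: clique_edge => //; rewrite EC; exact: (subsetP SC).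
Qed.
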